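(* Let $q$ be an odd prime power, let $n, t$ be positive integers, and let $n \ge m \ge k \ge 0$ be integers. Let $\mathcal{T}_{m,k}$ be the number of pairs $(M,C)$ with $M \in M_{n\times t}(\mathbb{F}_q)$ (the $n\times t$ matrices over $\mathbb{F}_q$) and $C \in M_n(\mathbb{F}_q)$ (the $n \times n$ matrices over $\mathbb{F}_q$) such that $\mathrm{rank}(M) = m$, $\mathrm{rank}(C) = k$, and the matrix equation $MZ = C$ has a solution $Z \in M_{t\times n}(\mathbb{F}_q)$. Then \[ \mathcal{T}_{m,k} \ll q^{nm + m(t-m) + mk + k(n-k)}. \]
   Context: The notation $X \ll Y$ means $X \le C\,Y$ for some positive constant $C$ independent of $q$ (depending only on $n, t, m, k$). *)

(* Defs.v *)
From HB Require Import structures.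
From mathcomp Require Import all_boot all_order all_algebra.
Set Implicit Arguments. Unset Strict Implicit. Unset Printing Implicit Defensive.
Import Order.TTheory GRing.Theory Num.Theory.

Definition T_count (F : finFieldType) (n t m k : nat) : nat :=
  #|[set p : 'M[F]_(n, t) * 'M[F]_n |
      [&& \rank p.1 == m, \rank p.2 == k &
          [exists Z : 'M[F]_(t, n), (p.1 *m Z == p.2)%R]]]|.

(* exponent nm + m(t-m) + mk + k(n-k), computed in int (no truncation) *)
Definition T_exp (n t m k : nat) : int :=
  (n%:Z * m%:Z + m%:Z * (t%:Z - m%:Z) + m%:Z * k%:Z + k%:Z * (n%:Z - k%:Z))%R.

(* Main.v *)
Require Import Defs.
From mathcomp Require Import all_boot all_order all_algebra.
From mathcomp Require Import zify ring.
Import Order.TTheory GRing.Theory Num.Theory.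
Set Implicit Arguments. Unset Strict Implicit. Unset Printing Implicit Defensive.
Local Open Scope ring_scope.

Section Count.
Variable F : finFieldType.

Lemma card_sub_row c m (U : 'M[F]_(m, c)) :
  (#|[set v : 'rV[F]_c | (v <= U)%MS]| <= #|F| ^ \rank U)%N.
Proof.
apply: (@leq_trans #|[set u *m row_base U | u in [set: 'rV[F]_(\rank U)]]|).
  apply: subset_leq_card; apply/subsetP => v; rewrite inE => hv.
  have := hv; rewrite -(eq_row_base U) => /submxP [u ->].
  by apply/imsetP; exists u; rewrite ?inE.
apply: leq_trans (leq_imset_card _ _) _.
by rewrite cardsT card_mx mul1n.
Qed.

Lemma rank_colmx c N (v : 'rV[F]_c) (A : 'M[F]_(N, c)) :
  (\rank A <= \rank (col_mx v A) <= (\rank A).+1)%N.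
Proof.
rewrite -(addsmxE v A); apply/andP; split; first by rewrite mxrankS // addsmxSr.
case: (mxrank_adds_leqif v A) => le _; apply: leq_trans le _.
by rewrite addnC -[X in (_ <= X)%N]addn1 leq_add2l rank_leq_row.
Qed.

Lemma row_ext_bound c d' (B : 'M[F]_(d', c)) N (A : 'M[F]_(N, c)) r : (0 < r)%N ->
  (#|[set v : 'rV[F]_c | (\rank (col_mx v A) == r) && (col_mx v A <= B)%MS]| <=
   ((\rank A == r) && (A <= B)%MS) * #|F| ^ r
   + ((\rank A == r.-1) && (A <= B)%MS) * #|F| ^ \rank B)%N.
Proof.
move=> r0.
have [AB|nAB] := boolP (A <= B)%MS; last first.
  apply: leq_trans (_ : 0 <= _)%N => //; rewrite leqn0 cards_eq0; apply/eqP/setP => v.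
  by rewrite !inE col_mx_sub (negbTE nAB) !andbF.
rewrite !andbT.
have [Ar|Ar] := eqVneq (\rank A) r.
  apply: leq_trans (leq_addr _ _); rewrite mul1n -{2}Ar.
  apply: leq_trans (card_sub_row A); apply: subset_leq_card; apply/subsetP => v.
  rewrite !inE -(addsmxE v A) => /andP [/eqP hr _].
  case: (mxrank_leqif_sup (addsmxSr v A)) => _; rewrite hr Ar eqxx => /esym.
  by rewrite addsmx_sub => /andP [].
have [Ar1|Ar1] := eqVneq (\rank A) r.-1.
  rewrite mul1n mul0n add0n.
  apply: leq_trans (card_sub_row B); apply: subset_leq_card; apply/subsetP => v.
  by rewrite !inE col_mx_sub => /andP [_ /andP []].
rewrite leqn0 cards_eq0; apply/eqP/setP => v; rewrite !inE.
apply/negbTE/andP => [[/eqP hr _]].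
move: (rank_colmx v A); rewrite hr; lia.
Qed.

Lemma sum_b_const (T : finType) (b : pred T) k :
  (\sum_(x : T) (b x) * k = #|[set x | b x]| * k)%N.
Proof.
rewrite -sum_nat_cond_const [RHS]big_mkcond; apply: eq_bigr => x _.
by case: (b x); rewrite ?mul1n ?mul0n.
Qed.

Lemma card_rank_sub c d' (B : 'M[F]_(d', c)) N r :
  (#|[set A : 'M[F]_(N, c) | (\rank A == r) && (A <= B)%MS]|
     <= 2 ^ N * #|F| ^ (r * (N + \rank B - r)))%N.
Proof.
have q0 : (0 < #|F|)%N by apply/card_gt0P; exists 0.
elim: N r => [|N IH] r.
  case: r => [|r].
    apply: leq_trans (_ : 1 <= _)%N; last by rewrite mul0n expn0 muln1; idtac.
    apply: leq_trans (subset_leq_card (_ : _ \subset [set 0])) _; last by rewrite cards1.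
    by apply/subsetP => A; rewrite !inE mxrank_eq0 => /andP [].
  apply: leq_trans (_ : 0 <= _)%N => //; rewrite leqn0 cards_eq0; apply/eqP/setP => A.
  rewrite !inE; apply/negbTE/andP => [[/eqP hr _]]; move: (rank_leq_row A); lia.
case: (posnP r) => [->|r0].
  apply: leq_trans (_ : 1 <= _)%N; last by rewrite mul0n expn0 muln1 expn_gt0.
  apply: leq_trans (subset_leq_card (_ : _ \subset [set 0])) _; last by rewrite cards1.
  by apply/subsetP => A; rewrite !inE mxrank_eq0 => /andP [].
have [rB|rB] := leqP r (\rank B); last first.
  apply: leq_trans (_ : 0 <= _)%N => //; rewrite leqn0 cards_eq0; apply/eqP/setP => A.
  rewrite !inE; apply/negbTE/andP => [[/eqP hr /mxrankS]]; lia.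
have [rN|rN] := leqP r N.+1; last first.
  apply: leq_trans (_ : 0 <= _)%N => //; rewrite leqn0 cards_eq0; apply/eqP/setP => A.
  rewrite !inE; apply/negbTE/andP => [[/eqP hr _]]; move: (rank_leq_row A); lia.
rewrite -sum1dep_card.
rewrite (reindex (fun p : 'M[F]_(N, c) * 'rV[F]_c => (col_mx p.2 p.1 : 'M[F]_(N.+1, c)))) /=; last first.
  apply: onW_bij; exists (fun A : 'M[F]_(1 + N, c) => (dsubmx A, usubmx A)).
    by case=> A v /=; rewrite col_mxKu col_mxKd.
  by move=> A /=; rewrite vsubmxK.
rewrite -(pair_big_dep predT (fun (A : 'M[F]_(N, c)) (v : 'rV[F]_c) =>
   (\rank (col_mx v A) == r) && (col_mx v A <= B)%MS) (fun _ _ => 1%N)) /=.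
apply: (@leq_trans (\sum_(A : 'M[F]_(N, c))
   (((\rank A == r) && (A <= B)%MS) * #|F| ^ r
   + ((\rank A == r.-1) && (A <= B)%MS) * #|F| ^ \rank B))%N).
  by apply: leq_sum => A _; rewrite sum1dep_card; apply: (row_ext_bound B A r0).
rewrite big_split /= !sum_b_const.
set d := \rank B.
apply: leq_trans (leq_add (leq_mul (IH r) (leqnn _)) (leq_mul (IH r.-1) (leqnn _))) _.
rewrite -!mulnA -!expnD expnS mul2n -addnn mulnDl leq_add // leq_mul // leq_pexp2l //.
  have -> : (r * (N.+1 + d - r) = r * (N + d - r) + r)%N.
    by rewrite -mulnSr; congr (_ * _)%N; lia.
  by [].
set x := (N.+1 + d - r)%N.
have hx : (N + d - r.-1 = x)%N by rewrite /x; lia.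
rewrite hx.
have hd : (d <= x)%N by rewrite /x; lia.
clear hx; move: x hd => x hd; clear -r0 hd.
case: r r0 => // r _; rewrite mulSn /=; lia.
Qed.

Lemma T_count_bound n t m k : (k <= m)%N -> (m <= n)%N ->
  (T_count F n t m k <= (2 ^ n * #|F| ^ (m * (n + t - m))) * (2 ^ n * #|F| ^ (k * (n + m - k))))%N.
Proof.
move=> km mn.
rewrite /T_count -sum1dep_card.
rewrite -(pair_big_dep predT (fun (M : 'M[F]_(n, t)) (C : 'M[F]_n) =>
   [&& \rank M == m, \rank C == k & [exists Z : 'M[F]_(t, n), M *m Z == C]]) (fun _ _ => 1%N)) /=.
apply: (@leq_trans (\sum_(M : 'M[F]_(n, t))
   ((\rank M == m) && (M <= (1%:M : 'M[F]_t))%MS) * (2 ^ n * #|F| ^ (k * (n + m - k))))%N).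
  apply: leq_sum => M _; rewrite sum1dep_card submx1 andbT.
  have [Mm|Mm] := eqVneq (\rank M) m; last first.
    rewrite mul0n leqn0 cards_eq0; apply/eqP/setP => C; rewrite !inE.
    by [].
  rewrite mul1n.
  have := card_rank_sub M^T n k; rewrite mxrank_tr Mm => h; apply: leq_trans h.
  rewrite -(card_imset _ (@trmx_inj _ n n)); apply: subset_leq_card.
  apply/subsetP => D /imsetP [C]; rewrite !inE => /and3P [_ Ck /existsP [Z /eqP hZ]] ->.
  by rewrite mxrank_tr Ck -hZ trmx_mul submxMl.
rewrite sum_b_const leq_mul //.
by have := card_rank_sub (1%:M : 'M[F]_t) n m; rewrite mxrank1.
Qed.
End Count.

Unset Implicit Arguments.
Theorem lemma3p3 (n t m k : nat) :
  (0 < n)%N -> (0 < t)%N -> (k <= m)%N -> (m <= n)%N ->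
  exists C : rat, 0 < C /\
    forall F : finFieldType, odd #|F| ->
      ((T_count F n t m k)%:R : rat) <= C * (#|F|%:R : rat) ^ (T_exp n t m k).
Proof.
move=> n0 t0 km mn.
exists (2 ^ n * 2 ^ n)%:R; split.
  by rewrite ltr0n muln_gt0 expn_gt0.
move=> F _.
have -> : T_exp n t m k = (m * (n + t - m) + k * (n + m - k))%N.
  rewrite /T_exp PoszD !PoszM -!subzn ?PoszD; try lia.
rewrite /exprz -natrX -natrM ler_nat.
apply: leq_trans (T_count_bound F t km mn) _.
by rewrite expnD mulnACA.
Qed.
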